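(* Let $q$ be a power of a prime $p$ and let $X=\{F=0\}\subset\mathbb{P}^n$ be a Frobenius nonclassical hypersurface of degree $d$ over $\mathbb{F}_q$. If $d\leq q+1$ and $F$ is not a $p$-th power, then $X$ contains at least one $\mathbb{F}_q$-point.
   Context: $X$ is Frobenius nonclassical if $F$ divides $\sum_{i=0}^n x_i^q\frac{\partial F}{\partial x_i}$. ''$F$ is a $p$-th power'' means $F=G^p$ for some polynomial $G$. *)

(* Defs.v *)
From HB Require Import structures.
From mathcomp Require Import all_boot all_order all_algebra all_field.
From mathcomp Require Import mpoly.
Set Implicit Arguments. Unset Strict Implicit. Unset Printing Implicit Defensive.
Import GRing.Theory.
Local Open Scope ring_scope.

(* Homogeneous coordinates x_0, ..., x_n of P^n : polynomials in n.+1 variables. *)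

Definition mpoly_dvd (n : nat) (K : comRingType) (F G : {mpoly K[n]}) : Prop :=
  exists H : {mpoly K[n]}, G = F * H.

Definition frob_sum (n : nat) (K : comRingType) (q : nat) (F : {mpoly K[n]})
  : {mpoly K[n]} :=
  \sum_(i < n) 'X_i ^+ q * F^`M(i).

Definition frobenius_nonclassical (n : nat) (K : comRingType) (q : nat)
  (F : {mpoly K[n]}) : Prop :=
  mpoly_dvd F (frob_sum q F).

Definition is_pth_power (n : nat) (K : comRingType) (p : nat)
  (F : {mpoly K[n]}) : Prop :=
  exists G : {mpoly K[n]}, F = G ^+ p.

(* Main.v *)
Require Import Defs.
From HB Require Import structures.
From mathcomp Require Import all_boot all_order all_algebra all_field.
From mathcomp Require Import mpoly.
From mathcomp Require Import zify.
Set Implicit Arguments. Unset Strict Implicit. Unset Printing Implicit Defensive.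
Import GRing.Theory.
Local Open Scope ring_scope.

Section PS.
Variable K : finFieldType.
Hypothesis hq0 : (#|K|%:R : K) = 0.

Lemma cardK_gt0 : (0 < #|K|)%N.
Proof. by apply/card_gt0P; exists 0. Qed.

Lemma unit_pow (x : K) : x != 0 -> x ^+ #|K|.-1 = 1.
Proof.
move=> nz; apply: (mulIf nz); rewrite mul1r -exprSr prednK ?expf_card //.
exact: cardK_gt0.
Qed.

Lemma exists_nonroot a : ~~ (#|K|.-1 %| a)%N ->
  exists c : K, c != 0 /\ c ^+ a != 1.
Proof.
move=> ndv; set r := (a %% #|K|.-1)%N.
have r0 : (0 < r)%N by rewrite lt0n; rewrite /dvdn in ndv.
have q1 : (0 < #|K|.-1)%N.
  by rewrite -(cardC1 (0 : K)); apply/card_gt0P; exists 1; rewrite !inE oner_eq0.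
have rq : (r < #|K|.-1)%N by rewrite ltn_mod.
case: (boolP [exists c : K, (c != 0) && (c ^+ a != 1)]).
  by case/existsP=> c /andP[]; exists c.
rewrite negb_exists => /forallP H.
have Hr : forall c : K, c != 0 -> c ^+ r = 1.
  move=> c nz; move: (H c); rewrite nz /= negbK => /eqP.
  rewrite {1}(divn_eq a #|K|.-1) exprD mulnC exprM unit_pow // expr1n mul1r.
  by [].
have P0 : ('X^r - 1 : {poly K}) != 0.
  by rewrite -size_poly_eq0 -polyC1 size_XnsubC.
have := max_poly_roots P0 (rs := enum [pred c : K | c != 0]).
rewrite enum_uniq size_XnsubC // -cardE.
have -> : #|[pred c : K | c != 0]| = #|K|.-1.
  by rewrite -(cardC1 (0 : K)); apply: eq_card => c; rewrite !inE.
rewrite ltnS leqNgt rq /=.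
move=> H1; suff Hall : all (root ('X^r - 1)) (enum [pred c : K | c != 0]).
  by move: (H1 Hall isT).
apply/allP => c; rewrite mem_enum inE => nz.
by rewrite rootE !hornerE Hr // subrr.
Qed.

Lemma psum a : \sum_(t : K) t ^+ a =
  if (0 < a)%N && (#|K|.-1 %| a)%N then -1 else 0.
Proof.
have S1 : \sum_(t : K) (1 : K) = 0.
  by rewrite sumr_const cardT -cardE hq0.
case: a => [|a] /=.
  by rewrite -[RHS]S1; apply: eq_bigr => t _; rewrite expr0.
rewrite (bigD1 0) //= expr0n /= add0r.
case: ifP => dv.
  have -> : \sum_(t : K | t != 0) t ^+ a.+1 = \sum_(t : K | t != 0) (1 : K).
    apply: eq_bigr => t nz; case/dvdnP: dv => j ->.
    by rewrite mulnC exprM unit_pow // expr1n.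
  by move/eqP: S1; rewrite (bigD1 0) //= addrC addr_eq0 => /eqP.
have [c [cnz ca]] := exists_nonroot (negbT dv).
set S := \sum_(t : K | t != 0) t ^+ a.+1.
have : S = c ^+ a.+1 * S.
  rewrite /S mulr_sumr (reindex_inj (mulfI cnz)) /=.
  apply: eq_big => t; first by rewrite mulf_eq0 (negbTE cnz).
  by move=> _; rewrite exprMn.
move/eqP; rewrite -{1}(mul1r S) -subr_eq0 -mulrBl mulf_eq0 subr_eq0 eq_sym.
by rewrite (negbTE ca) => /eqP.
Qed.

Definition Sv (a : nat) : K := if (0 < a)%N && (#|K|.-1 %| a)%N then -1 else 0.

Lemma psumN N (a : 'I_N -> nat) :
  \sum_(x : {ffun 'I_N -> K}) \prod_i x i ^+ a i = \prod_i Sv (a i).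
Proof.
rewrite -(bigA_distr_bigA (fun i (j : K) => j ^+ a i)) /=; apply: eq_bigr => i _; exact: psum.
Qed.

Lemma mdeg_ge N (m : 'X_{1..N}) i : (m i <= mdeg m)%N.
Proof. by rewrite mdegE (bigD1 i) //= leq_addr. Qed.

Lemma mdeg_ge2 N (m : 'X_{1..N}) i j : i != j -> (m i + m j <= mdeg m)%N.
Proof.
move=> ij; rewrite mdegE (bigD1 i) //= (bigD1 j) /=; last by rewrite eq_sym.
by rewrite addnA leq_addr.
Qed.

Lemma dvd_small (q x : nat) : (0 < q)%N -> (0 < x)%N -> (x <= q.*2)%N -> (q %| x)%N ->
  x = q \/ x = q.*2.
Proof.
move=> q0 x0 xq /dvdnP [k] xe; subst x; move: x0 xq.
case: k => [|[|[|k]]] /= x0 xq; rewrite ?mul0n ?mul1n; try lia.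
Qed.

Lemma coef_extract N (e m : 'X_{1..N}) : e != 0%MM ->
  (mdeg e < #|K|)%N -> (mdeg m < #|K|)%N -> m != e ->
  \prod_i Sv (m i + (#|K|.-1 - e i)) = 0.
Proof.
move=> enz de dm nme.
case: (boolP [forall i, (0 < m i + (#|K|.-1 - e i))%N && (#|K|.-1 %| m i + (#|K|.-1 - e i))%N]); last first.
  rewrite negb_forall => /existsP [i Hi]; rewrite (bigD1 i) //= /Sv (negbTE Hi) mul0r //.
move/forallP => H; exfalso.
have q1 : (0 < #|K|.-1)%N.
  by rewrite -(cardC1 (0 : K)); apply/card_gt0P; exists 1; rewrite !inE oner_eq0.
have Hi : forall i, m i = e i \/ (m i = #|K|.-1 /\ e i = 0%N).
  move=> i; have /andP[h1 h2] := H i.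
  have mi := mdeg_ge m i; have ei := mdeg_ge e i.
  have := dvd_small q1 h1 _ h2; lia.
have [i mei] : exists i, m i != e i.
  case: (boolP [exists i, m i != e i]) => [/existsP//|].
  rewrite negb_exists => /forallP hh; case/negP: nme; apply/eqP/mnmP => i.
  by apply/eqP; move: (hh i); rewrite negbK.
have [j ej] : exists j, e j != 0%N.
  case: (boolP [exists j, e j != 0%N]) => [/existsP//|].
  rewrite negb_exists => /forallP hh; case/negP: enz; apply/eqP/mnmP => j.
  by rewrite mnm0E; apply/eqP; move: (hh j); rewrite negbK.
have ij : i != j.
  by apply/eqP => eij; move: mei ej; rewrite eij; case: (Hi j) => [->|[_ ->]]; rewrite ?eqxx.
have := mdeg_ge2 m ij; case: (Hi i) => [/eqP|[mi ei]]; first by rewrite (negbTE mei).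
case: (Hi j) => [mj|[mj ej0]]; last by move: ej; rewrite ej0.
have : (0 < #|K|)%N by apply/card_gt0P; exists 0.
move: ej; rewrite mi mj; lia.
Qed.

Lemma vanish N (H : {mpoly K[N]}) : (1 < N)%N -> (msize H <= #|K|)%N ->
  (forall x : 'I_N -> K, (exists i, x i != 0) -> H.@[x] = 0) -> H = 0.
Proof.
move=> N2 sH Hz.
have q1 : (0 < #|K|.-1)%N.
  by rewrite -(cardC1 (0 : K)); apply/card_gt0P; exists 1; rewrite !inE oner_eq0.
have step1 : forall e, e != 0%MM -> (mdeg e < #|K|)%N -> H@_e = 0.
  move=> e enz de.
  pose c i := (#|K|.-1 - e i)%N.
  pose T := \sum_(x : {ffun 'I_N -> K}) H.@[x] * \prod_i x i ^+ c i.
  have T0 : T = 0.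
    apply: big1 => x _.
    case: (boolP [exists i, x i != 0]) => [/existsP ex|].
      by rewrite Hz ?mul0r.
    rewrite negb_exists => /forallP x0.
    have [i ci] : exists i, (0 < c i)%N.
      case: (boolP [exists i, 0 < c i]%N) => [/existsP//|].
      rewrite negb_exists => /forallP hh; exfalso.
      have [j ej] : exists j, e j != 0%N.
        case: (boolP [exists j, e j != 0%N]) => [/existsP//|].
        rewrite negb_exists => /forallP h2; case/negP: enz; apply/eqP/mnmP => j.
        by rewrite mnm0E; apply/eqP; move: (h2 j); rewrite negbK.
      have [i ij] : exists i : 'I_N, i != j.
        case: (boolP (j == Ordinal (ltnW N2))) => hj.
          by exists (Ordinal N2); rewrite (eqP hj) -val_eqE.
        by exists (Ordinal (ltnW N2)); rewrite eq_sym.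
      have := mdeg_ge2 e ij; have := hh i; rewrite /c lt0n negbK => /eqP.
      move: ej de; lia.
    rewrite (bigD1 i) //= (eqP (negbNE (x0 i))) expr0n /=.
    by rewrite eqn0Ngt ci /= mul0r mulr0.
  have T1 : T = H@_e * (-1) ^+ N.
    rewrite /T.
    under eq_bigr => x _ do rewrite mevalE mulr_suml.
    rewrite exchange_big /=.
    under eq_bigr => m _ do (under eq_bigr => x _ do rewrite -mulrA -big_split /=;
       rewrite -mulr_sumr).
    under eq_bigr => m _ do (under eq_bigr => x _ do
       (under eq_bigr => i _ do rewrite -exprD); rewrite psumN).
    case: (boolP (e \in msupp H)) => eH.
      rewrite (bigD1_seq e) ?msupp_uniq //= [X in _ + X]big1_seq ?addr0.
        congr (_ * _); rewrite -[in RHS](card_ord N) -prodr_const; apply: eq_bigr => i _.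
        rewrite /Sv /c subnKC; last by have := mdeg_ge e i; lia.
        by rewrite q1 dvdnn.
      move=> m /andP [mne mH]; rewrite coef_extract ?mulr0 //.
      by apply: leq_trans (msize_mdeg_lt mH) sH.
    rewrite (memN_msupp_eq0 eH) mul0r big1_seq // => m /andP[_ mH].
    rewrite coef_extract ?mulr0 //; first by apply: leq_trans (msize_mdeg_lt mH) sH.
    by apply/eqP => me; move: eH; rewrite -me mH.
  move: T1; rewrite T0 => /esym/eqP; rewrite mulf_eq0 signr_eq0 orbF => /eqP //.
have HC : H = (H@_0%MM)%:MP.
  apply/mpolyP => m; rewrite mcoeffC.
  case: (eqVneq m 0%MM) => [->|mnz]; first by rewrite mulr1.
  rewrite mulr0; case: (boolP (m \in msupp H)) => mH; last exact: memN_msupp_eq0.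
  by apply: step1 => //; apply: leq_trans (msize_mdeg_lt mH) sH.
rewrite HC; congr (_ %:MP).
have ex1 : exists i : 'I_N, (fun _ => (1 : K)) i != 0.
  by exists (Ordinal (ltnW N2)); rewrite oner_eq0.
by have := Hz _ ex1; rewrite {1}HC mevalC.
Qed.
End PS.
Section H.
Variable (N : nat) (R : comRingType).
Implicit Types (P F : {mpoly R[N]}) (m u : 'X_{1..N}).

Lemma mcoeffMXu P u m :
  (P * 'X_[u])@_m = if (u <= m)%MM then P@_(m - u) else 0.
Proof.
case: ifP => le.
  by rewrite -{1}(submK le) addmC mcoeffMX.
apply: memN_msupp_eq0; apply/negP.
rewrite (perm_mem (msuppMX P u)) => /mapP [m' _ em].
move/negP: le; apply; rewrite em; apply/mnm_lepP => i; rewrite mnmDE leq_addr //.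
Qed.

Lemma mcoeffXuM P u m :
  ('X_[u] * P)@_m = if (u <= m)%MM then P@_(m - u) else 0.
Proof. by rewrite mulrC mcoeffMXu. Qed.

Lemma dhomog_deriv F d i : F \is d.-homog -> F^`M(i) \is d.-1.-homog.
Proof.
move=> /dhomogP hF; apply/dhomogP => m; rewrite mcoeff_msupp mcoeff_mderiv.
move=> nz; have : F@_(m + U_(i)) != 0.
  by apply: contra nz => /eqP ->; rewrite mul0rn.
rewrite -mcoeff_msupp => /hF.
move=> <-; have := mdegD m U_(i); rewrite mdeg1 addn1 /= => h.
exact: (esym (congr1 predn h)).
Qed.

Lemma dhomog_msize_le F d : F \is d.-homog -> (msize F <= d.+1)%N.
Proof.
move=> hF; case: (eqVneq F 0) => [->|nz]; first by rewrite mmeasure0.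
have h2 := dhomog_msize hF.
have := dhomog_uniq nz hF h2 => ->.
by rewrite leqSpred.
Qed.

Lemma euler F d : F \is d.-homog ->
  \sum_(i < N) 'X_i * F^`M(i) = d%:R *: F.
Proof.
move=> /dhomogP hF; apply/mpolyP => m.
rewrite raddf_sum mcoeffZ /=.
have -> : \sum_(i < N) ('X_i * F^`M(i))@_m = \sum_(i < N) F@_m *+ m i.
  apply: eq_bigr => i _; rewrite mcoeffXuM.
  case: ifP => le.
    rewrite mcoeff_mderiv submK // mnmBE mnm1E eqxx.
    by rewrite [(_ - _)%N]subn1 prednK // lt0n -lep1mP.
  by move/negbT: le; rewrite lep1mP negbK => /eqP ->.
rewrite sumrMnr -mdegE.
case: (eqVneq (F@_m) 0) => [->|nz]; first by rewrite mul0rn mulr0.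
by rewrite hF ?mcoeff_msupp // mulr_natl.
Qed.

End H.
Lemma pth (K : finFieldType) (p k N : nat) (F : {mpoly K[N]}) :
  prime p -> (0 < k)%N -> #|K| = (p ^ k)%N ->
  (forall i, F^`M(i) = 0) -> exists G, F = G ^+ p.
Proof.
move=> pp k0 cK dF.
have hp : p \in [pchar K] by apply: card_finPcharP cK pp.
have hpM : p \in [pchar {mpoly K[N]}].
  by rewrite inE pp /= -mpolyC_nat (pcharf0 hp).
have dvm : forall m, m \in msupp F -> forall i, (p %| m i)%N.
  move=> m mF i; case: (eqVneq (m i) 0%N) => [->|mi0]; first exact: dvdn0.
  have := dF i; move/(congr1 (mcoeff (m - U_(i)))).
  rewrite mcoeff_mderiv submK; last by rewrite lep1mP.
  rewrite mcoeff0 mnmBE mnm1E eqxx [(_ - _)%N]subn1 prednK ?lt0n //.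
  move/eqP; rewrite -mulr_natr mulf_eq0.
  by move: mF; rewrite mcoeff_msupp => /negbTE -> /=; rewrite (dvdn_pcharf hp).
pose md (m : 'X_{1..N}) := [multinom (m i %/ p)%N | i < N].
pose G := \sum_(m <- msupp F) (F@_m ^+ (p ^ k.-1)) *: 'X_[md m].
exists G.
rewrite -(pFrobenius_autE hpM) /G rmorph_sum /= {1}(mpolyE F).
apply: eq_big_seq => m mF.
rewrite pFrobenius_autE exprZn mpolyXn -exprM -expnSr prednK // -cK expf_card.
congr (_ *: 'X_[_]); apply/mnmP => i; rewrite mulmnE mnmE divnK //.
exact: dvm.
Qed.


Unset Implicit Arguments.
Theorem corollary2p4 (p k : nat) (K : finFieldType) (n d : nat)
  (F : {mpoly K[n.+1]}) :
  prime p -> (0 < k)%N -> #|K| = (p ^ k)%N ->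
  (1 <= n)%N ->
  F \is d.-homog ->
  frobenius_nonclassical (p ^ k)%N F ->
  (d <= (p ^ k).+1)%N ->
  ~ is_pth_power p F ->
  exists x : 'I_n.+1 -> K, (exists i, x i != 0) /\ F.@[x] = 0.
Proof.
move=> pp k0 cK n1 hF [G hG] dq npth.
have hp : p \in [pchar K] := card_finPcharP cK pp.
have hq0 : (#|K|%:R : K) = 0.
  by rewrite cK natrX (pcharf0 hp) expr0n eqn0Ngt k0.
have p2 : (2 <= p)%N := prime_gt1 pp.
have q2 : (2 <= p ^ k)%N.
  by apply: (leq_trans p2); rewrite -{1}(expn1 p) leq_pexp2l // ltnW.
case: (boolP [exists x : {ffun 'I_n.+1 -> K}, [exists i, x i != 0] && (F.@[x] == 0)]).
  case/existsP => x /andP [/existsP [i xi] /eqP Fx].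
  by exists x; split => //; exists i.
rewrite negb_exists => /forallP Hno; exfalso.
have Fnz' : forall x : 'I_n.+1 -> K, (exists i, x i != 0) -> F.@[x] != 0.
  move=> x [i xi]; apply/negP => /eqP Fx.
  move: (Hno [ffun j => x j]).
  rewrite (@meval_eq _ _ _ x) => [|j]; last by rewrite ffunE.
  rewrite Fx eqxx andbT => /negP; apply; apply/existsP; exists i; by rewrite ffunE.
have dzero : (forall i, F^`M(i) = 0) -> False.
  by move=> h; apply: npth; apply: (pth pp k0 cK h).
have Fnz : F != 0.
  apply/eqP => F0; apply: npth; exists 0; rewrite F0 expr0n.
  by rewrite eqn0Ngt prime_gt0.
case: (posnP d) => [d0|dpos].
  apply: dzero => i; apply/mpolyP => m.
  rewrite mcoeff_mderiv mcoeff0 (dhomog_nemf_coeff hF) ?mul0rn //.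
  have := mdegD m U_(i); rewrite mdeg1 d0 => h.
  by change (mdeg (m + U_(i)) != 0%N); rewrite h addn1.
have hX : forall i : 'I_n.+1, ('X_i : {mpoly K[n.+1]}) ^+ (p ^ k) \is (p ^ k).-homog.
  move=> i; have := @dhomogMn _ _ _ 1 ('X_i : {mpoly K[n.+1]}) (p ^ k).
  by rewrite mul1n; apply; rewrite dhomogX; apply/eqP; exact: mdeg1.
have hfs : frob_sum (p ^ k) F \is (p ^ k + d.-1).-homog.
  rewrite /frob_sum; apply: rpred_sum => i _; apply: dhomogM => //.
  exact: dhomog_deriv.
have Ev : forall x, (frob_sum (p ^ k) F).@[x] = d%:R * F.@[x].
  move=> x; rewrite -mevalZ -(euler hF) /frob_sum !raddf_sum /=.
  apply: eq_bigr => i _; rewrite !mevalM rmorphXn /= mevalXU -cK expf_card.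
  by [].
have msF : (d < msize F)%N.
  have := msize_mdeg_lt (mlead_supp Fnz).
  by rewrite (dhomog_mf hF (mlead_supp Fnz)).
have msG : (msize G <= p ^ k)%N.
  case: (eqVneq G 0) => [->|Gnz]; first by rewrite mmeasure0.
  have := dhomog_msize_le hfs; rewrite hG msizeM //.
  move: msF dpos; set a := mmeasure _ F; set b := mmeasure _ G; set q := (p ^ k)%N.
  lia.
pose H := G - (d%:R : K)%:MP.
have H0 : H = 0.
  apply: (vanish hq0) => //.
    rewrite cK /H; have := mmeasureD_le mdeg G (- (d%:R : K)%:MP).
    rewrite mmeasureN mmeasureC => h; apply: (leq_trans h).
    rewrite geq_max msG; case: (_ != 0) => /=; lia.
  move=> x xnz; rewrite /H mevalB mevalC.
  have := Ev x; rewrite hG mevalM mulrC => /eqP.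
  rewrite -subr_eq0 -mulrBl mulf_eq0 (negbTE (Fnz' x xnz)) orbF => /eqP //.
have GC : G = (d%:R : K)%:MP by apply/eqP; rewrite -subr_eq0 -/H H0.
have dK : (d%:R : K) = 0.
  have := congr1 (mcoeff (mlead F)) hG.
  rewrite (dhomog_nemf_coeff hfs); last first.
    rewrite (dhomog_mf hF (mlead_supp Fnz)); lia.
  rewrite GC mulrC mcoeffCM => /esym/eqP; rewrite mulf_eq0.
  have := mlead_supp Fnz; rewrite mcoeff_msupp => /negbTE ->; rewrite orbF.
  by move/eqP.
have dq' : (d <= p ^ k)%N.
  rewrite leq_eqVlt in dq; case/orP: dq => [/eqP dE|]; last by rewrite ltnS.
  by move: dK; rewrite dE -addn1 natrD -cK hq0 add0r => /eqP; rewrite oner_eq0.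
have fs0 : frob_sum (p ^ k) F = 0 by rewrite hG GC dK mulr0.
apply: dzero => i; apply/mpolyP => m; rewrite mcoeff0.
case: (eqVneq (F^`M(i))@_m 0) => // nz; exfalso.
have mdm : mdeg m = d.-1.
  by apply: (dhomog_mf (dhomog_deriv i hF)); rewrite mcoeff_msupp.
have := congr1 (mcoeff (m + U_(i) *+ (p ^ k))%MM) fs0.
rewrite mcoeff0 /frob_sum raddf_sum (bigD1 i) //= big1 ?addr0.
  rewrite mpolyXn mcoeffXuM ifT; last first.
    by apply/mnm_lepP => j; rewrite mnmDE leq_addl.
  by rewrite addmK => /eqP; rewrite (negbTE nz).
move=> j ji; rewrite mpolyXn mcoeffXuM ifF //.
apply/negP => /mnm_lepP /(_ j); rewrite mnmDE !mulmnE !mnm1E eqxx eq_sym (negbTE ji) mul0n addn0 mul1n.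
have := mdeg_ge m j; rewrite mdm; lia.
Qed.
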